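(* Let $\lambda_{\max}=1$ and let $F:[0,1]\to\mathbb{R}_+$ be continuously differentiable with $F(0)=0$, such that $F(x)<F^\star$ for all $x\in[0,1)$ and $F'(1)>0$. Then there exists $k\in(0,F'(1)]$ such that $F(x)\le k(x-1)+F(1)$ for all $x\in[0,1]$.
   Context: $F^\star=\sup\{\mathbb{E}_\alpha[F(X)]:\alpha$ a probability measure on $[0,\lambda_{\max}]$, $X\sim\alpha$, $\mathbb{E}_\alpha[X]\le1\}$. *)

(* Defs.v *)
From HB Require Import structures.
From mathcomp Require Import all_boot all_order all_algebra.
From mathcomp Require Import all_classical all_reals all_analysis.
Set Implicit Arguments. Unset Strict Implicit. Unset Printing Implicit Defensive.
Import Order.TTheory GRing.Theory Num.Theory.
Import numFieldNormedType.Exports.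
Local Open Scope classical_set_scope.
Local Open Scope ring_scope.

(* A probability measure on [0,lam] is represented as a (Borel) probability
   measure on R giving full mass to [0,lam]. *)
Definition Fstar (R : realType) (lam : R) (F : R -> R) : \bar R :=
  ereal_sup [set (\int[P]_(x in [set` `[0, lam]%R]) (F x)%:E)%E
            | P in [set P : probability R R |
                     P [set` `[0, lam]] = 1%E /\
                     (\int[P]_(x in [set` `[0, lam]%R]) x%:E <= 1)%E]].

Definition C1_on01 (R : realType) (F F' : R -> R) : Prop :=
  {within `[0, 1], continuous F'} /\
  forall x : R, x \in `[0, 1] ->
    (fun y => (F y - F x) / (y - x)) @ within [set y : R | y \in `[0, 1]] (x^')
      --> F' x.

(* Main.v *)
Require Import Defs.
From HB Require Import structures.
From mathcomp Require Import all_boot all_order all_algebra.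
From mathcomp Require Import all_classical all_reals all_analysis.
Import Order.TTheory GRing.Theory Num.Theory.
Import numFieldNormedType.Exports.
Local Open Scope classical_set_scope.
Local Open Scope ring_scope.
From mathcomp Require Import ring lra measurable_realfun.
Lemma contF (R : realType) (F F' : R -> R) : C1_on01 F F' -> {within `[0,1], continuous F}.
Proof.
move=> [_ dF]; apply/subspace_continuousP => x Ax.
have Ax' : x \in `[0,1] by rewrite inE.
have /cvgrPdist_lt H := dF x Ax'.
have [d /= d0 Hd] : exists2 d : R, 0 < d & ball x d
    `<=` (fun t : R => t != x -> t \in `[0, 1] -> `|F' x - (F t - F x) / (t - x)| < 1).
  by have := H 1 ltr01; rewrite /dnbhs /within /= => /nbhs_ballP.
apply/cvgrPdist_lt => e e0; rewrite /within /=.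
set C := `|F' x| + 1.
have C0 : 0 < C by rewrite /C; apply: ltr_wpDl.
apply/nbhs_ballP; exists (Num.min d (e / C)).
  by rewrite /= lt_min d0 divr_gt0.
move=> y; rewrite /ball /= lt_min => /andP[yd ye] Ay.
have [->|yx] := eqVneq y x; first by rewrite subrr normr0.
have := Hd y; rewrite /ball /= yd => /(_ isT yx).
rewrite inE => /(_ Ay) hq.
have hq' : `|(F y - F x) / (y - x)| <= C.
  set q := (F y - F x) / (y - x) in hq *.
  apply: (le_trans (y := `|F' x| + `|F' x - q|)).
    have {1}-> : q = F' x - (F' x - q) by ring.
    exact: ler_normB.
  by rewrite lerD2l ltW.
have yx0 : y - x != 0 by rewrite subr_eq0.
have -> : F x - F y = - ((F y - F x) / (y - x) * (y - x)) by rewrite divfK // opprB.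
rewrite normrN normrM.
rewrite distrC in ye.
apply: (le_lt_trans (y := C * `|y - x|)); first by rewrite ler_wpM2r.
by rewrite -ltr_pdivlMl // mulrC.
Qed.
Lemma Fstar_le (R : realType) (F : R -> R) (M : R) :
  (forall x, x \in `[0,1] -> 0 <= F x) -> {within `[0,1], continuous F} ->
  (forall x, x \in `[0,1] -> F x <= M) -> (Fstar 1 F <= M%:E)%E.
Proof.
move=> F0 cF FM.
have M0 : 0 <= M by apply: (le_trans (F0 0 _)) (FM 0 _); rewrite in_itv /= lexx ler01.
apply: ge_ereal_sup => _ [P [P1 _] <-].
have mA : measurable (`[0%R, 1%R]%classic : set R) by [].
have := @ge0_le_integral _ _ _ P _ mA (fun x => (F x)%:E) (cst M%:E).
rewrite integral_cst // => H.
apply: le_trans (H _ _ _ _) _.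
- by move=> x Ax; rewrite lee_fin F0 // inE.
- by apply/measurable_EFinP; apply: subspace_continuous_measurable_fun => //.
- by apply: measurable_cst.
- by move=> x Ax; rewrite lee_fin FM // inE.
- apply: (@le_trans _ _ (M%:E * 1)%E); last by rewrite mule1.
  by apply: lee_wpmul2l; [rewrite lee_fin | exact: probability_le1].
Qed.

Theorem lemmaA1 (R : realType) (F F' : R -> R) :
  (forall x : R, x \in `[0, 1] -> 0 <= F x) ->
  C1_on01 F F' ->
  F 0 = 0 ->
  (forall x : R, 0 <= x < 1 -> ((F x)%:E < Fstar 1 F)%E) ->
  0 < F' 1 ->
  exists k : R, 0 < k <= F' 1 /\
    (forall x : R, x \in `[0, 1] -> F x <= k * (x - 1) + F 1).
Proof.
move=> F0 C1 _ Flt d1.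
have cF := contF _ _ _ C1.
have [c c01 Fc] := EVT_max ler01 cF.
have FsC := Fstar_le _ _ _ F0 cF Fc.
have c1 : c = 1.
  move: c01; rewrite in_itv /= => /andP[c0 c1].
  have [cl1|] := ltP c 1; last by move=> h; apply/eqP; rewrite eq_le c1 h.
  have := Flt c; rewrite c0 cl1 => /(_ isT) h.
  by have := lt_le_trans h FsC; rewrite ltxx.
subst c.
have Flt1 : forall x, 0 <= x < 1 -> F x < F 1.
  by move=> x hx; rewrite -lte_fin; apply: lt_le_trans (Flt x hx) FsC.
have [_ dF] := C1.
have /cvgrPdist_lt H := dF 1 (ltac:(by rewrite in_itv /= lexx ler01)).
have e0 : 0 < F' 1 / 2 by rewrite divr_gt0.
have [d /= d0 Hd] : exists2 d : R, 0 < d & ball (1:R) d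
    `<=` (fun t : R => t != 1 -> t \in `[0, 1] -> `|F' 1 - (F t - F 1) / (t - 1)| < F' 1 / 2).
  by have := H _ e0; rewrite /dnbhs /within /= => /nbhs_ballP.
set a := Num.max 0 (1 - d / 2).
have a0 : 0 <= a by rewrite le_max lexx.
have a1 : a < 1 by rewrite gt_max ltr01 /= ltrBlDr ltrDl divr_gt0.
have cFa : {within `[0, a], continuous F}.
  apply: continuous_subspaceW cF => t /=; rewrite !in_itv /= => /andP[-> ta].
  by rewrite (le_trans ta (ltW a1)).
have [c2 c2a Fc2] := EVT_max a0 cFa.
have c2lt : F c2 < F 1.
  by apply: Flt1; move: c2a; rewrite in_itv /= => /andP[-> ca]; apply: le_lt_trans a1.
set k := Num.min (F' 1 / 2) (F 1 - F c2).
have k0 : 0 < k by rewrite lt_min e0 subr_gt0.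
have kle : k <= F' 1 / 2 by rewrite ge_min lexx.
have kle2 : k <= F 1 - F c2 by rewrite ge_min lexx orbT.
exists k; split.
  rewrite k0 /=; lra.
move=> x; rewrite in_itv /= => /andP[x0 x1].
have [xa|ax] := leP x a.
  have := Fc2 x; rewrite in_itv /= x0 xa => /(_ isT) h.
  nra.
have [->|xn1] := eqVneq x 1; first by rewrite subrr mulr0 add0r.
have xl1 : x < 1 by rewrite lt_neqAle xn1 x1.
have hb : ball (1:R) d x.
  rewrite /ball /= ger0_norm ?subr_ge0 //.
  move: ax; rewrite /a gt_max => /andP[_ h]; lra.
have := Hd x hb xn1; rewrite in_itv /= x0 x1 => /(_ isT) /ltr_normlW hq.
have xn1' : x - 1 != 0 by rewrite subr_eq0.
have hF : F x - F 1 = (F x - F 1) / (x - 1) * (x - 1) by rewrite divfK.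
move: hq hF; set q := (F x - F 1) / (x - 1) => hq hF.
nra.
Qed.
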